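(* Let $\mathcal{E}$ be a right exact category satisfying axiom R3. Suppose given a commutative diagram with rows $A\xrightarrow{\alpha}B\xrightarrow{\beta}C$, $X\to Y\to Z$, $A\xrightarrow{\alpha}B\xrightarrow{\beta}C$ and vertical morphisms $A\to X\to A$, $B\to Y\to B$, $C\to Z\to C$ whose composites are the identities of $A$, $B$, $C$ respectively. If $X\to Y\to Z$ is a conflation, then $A\xrightarrow{\alpha}B\xrightarrow{\beta}C$ is a conflation.
   Context: A conflation category is an additive category with a class of kernel-cokernel pairs (conflations; kernel part = inflation, cokernel part = deflation) closed under isomorphism. It is right exact if $1_0$ is a deflation, deflations compose, and pullbacks of deflations along arbitrary morphisms exist and are deflations. Axiom R3: if $i\colon A\to B$ and $p\colon B\to C$ are morphisms such that $p$ has a kernel and $p\circ i$ is a deflation, then $p$ is a deflation. *)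

(* Defs.v *)
From HB Require Import structures.
From mathcomp Require Import all_boot all_algebra.
Set Implicit Arguments. Unset Strict Implicit. Unset Printing Implicit Defensive.
Import GRing.Theory.
Local Open Scope ring_scope.

Record PreaddCat := {
  Obj :> Type;
  Mor : Obj -> Obj -> zmodType;
  idm : forall A, Mor A A;
  comp : forall A B C, Mor B C -> Mor A B -> Mor A C;
  comp_assoc : forall A B C D (h : Mor C D) (g : Mor B C) (f : Mor A B),
      comp h (comp g f) = comp (comp h g) f;
  comp_idl : forall A B (f : Mor A B), comp (idm B) f = f;
  comp_idr : forall A B (f : Mor A B), comp f (idm A) = f;
  comp_addl : forall A B C (g g' : Mor B C) (f : Mor A B),
      comp (g + g') f = comp g f + comp g' f;
  comp_addr : forall A B C (g : Mor B C) (f f' : Mor A B),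
      comp g (f + f') = comp g f + comp g f'
}.

Arguments Mor {p}.
Arguments idm {p}.
Arguments comp {p A B C}.
Notation "g \oc f" := (comp g f) (at level 40, left associativity).

Section Notions.
Variable E : PreaddCat.

Definition is_zero_obj (Z : E) : Prop :=
  forall A : E, (forall f g : Mor A Z, f = g) /\ (forall f g : Mor Z A, f = g).

Definition is_biproduct (A B P : E) (i1 : Mor A P) (i2 : Mor B P)
  (p1 : Mor P A) (p2 : Mor P B) : Prop :=
  p1 \oc i1 = idm A /\ p2 \oc i2 = idm B /\
  p2 \oc i1 = 0 /\ p1 \oc i2 = 0 /\
  (i1 \oc p1) + (i2 \oc p2) = idm P.

Definition is_additive : Prop :=
  (exists Z : E, is_zero_obj Z) /\
  (forall A B : E, exists (P : E) (i1 : Mor A P) (i2 : Mor B P)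
      (p1 : Mor P A) (p2 : Mor P B), is_biproduct i1 i2 p1 p2).

Definition is_iso (A B : E) (f : Mor A B) : Prop :=
  exists g : Mor B A, g \oc f = idm A /\ f \oc g = idm B.

Definition is_kernel (K B C : E) (i : Mor K B) (p : Mor B C) : Prop :=
  p \oc i = 0 /\
  forall (T : E) (f : Mor T B), p \oc f = 0 -> exists! g : Mor T K, i \oc g = f.

Definition is_cokernel (A B C : E) (p : Mor B C) (i : Mor A B) : Prop :=
  p \oc i = 0 /\
  forall (T : E) (f : Mor B T), f \oc i = 0 -> exists! g : Mor C T, g \oc p = f.

Definition has_kernel (B C : E) (p : Mor B C) : Prop :=
  exists (K : E) (i : Mor K B), is_kernel i p.

Definition is_kernel_cokernel_pair (A B C : E) (i : Mor A B) (p : Mor B C) : Prop :=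
  is_kernel i p /\ is_cokernel p i.

(** Square  P --f'--> B
            |p'       |p
            C' --f--> C   is a pullback. *)
Definition is_pullback (P B C C' : E) (p' : Mor P C') (f' : Mor P B)
  (p : Mor B C) (f : Mor C' C) : Prop :=
  p \oc f' = f \oc p' /\
  forall (T : E) (u : Mor T C') (v : Mor T B), f \oc u = p \oc v ->
    exists! w : Mor T P, p' \oc w = u /\ f' \oc w = v.
End Notions.

Record ConflCat := {
  cat :> PreaddCat;
  cat_additive : is_additive cat;
  Confl : forall A B C : cat, Mor A B -> Mor B C -> Prop;
  confl_kc : forall (A B C : cat) (i : Mor A B) (p : Mor B C),
      Confl i p -> is_kernel_cokernel_pair i p;
  confl_iso : forall (A B C A' B' C' : cat) (i : Mor A B) (p : Mor B C)
      (i' : Mor A' B') (p' : Mor B' C') (a : Mor A A') (b : Mor B B') (c : Mor C C'),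
      is_iso a -> is_iso b -> is_iso c ->
      b \oc i = i' \oc a -> c \oc p = p' \oc b ->
      Confl i p -> Confl i' p'
}.

Arguments Confl {c0 A B C}.

Section Exact.
Variable E : ConflCat.

Definition is_deflation (B C : E) (p : Mor B C) : Prop :=
  exists (A : E) (i : Mor A B), Confl i p.

Definition is_inflation (A B : E) (i : Mor A B) : Prop :=
  exists (C : E) (p : Mor B C), Confl i p.

Definition right_exact : Prop :=
  (forall Z : E, is_zero_obj Z -> is_deflation (idm Z)) /\
  (forall (A B C : E) (f : Mor A B) (g : Mor B C),
      is_deflation f -> is_deflation g -> is_deflation (g \oc f)) /\
  (forall (B C C' : E) (p : Mor B C) (f : Mor C' C), is_deflation p ->
      exists (P : E) (p' : Mor P C') (f' : Mor P B),
        is_pullback p' f' p f /\ is_deflation p').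

Definition axiom_R3 : Prop :=
  forall (A B C : E) (i : Mor A B) (p : Mor B C),
    has_kernel p -> is_deflation (p \oc i) -> is_deflation p.
End Exact.

(* Main.v *)
Require Import Defs.
From mathcomp Require Import all_boot all_algebra.
Local Open Scope ring_scope.

Lemma comp0l (E : PreaddCat) (A B C : E) (f : Mor A B) : (0 : Mor B C) \oc f = 0.
Proof.
have H : (0 : Mor B C) \oc f + (0 : Mor B C) \oc f = (0 : Mor B C) \oc f + 0.
  by rewrite -comp_addl GRing.addr0 GRing.addr0.
by move: H; move/GRing.addrI.
Qed.

Lemma comp0r (E : PreaddCat) (A B C : E) (g : Mor B C) : g \oc (0 : Mor A B) = 0.
Proof.
have H : g \oc (0 : Mor A B) + g \oc (0 : Mor A B) = g \oc (0 : Mor A B) + 0.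
  by rewrite -comp_addr GRing.addr0 GRing.addr0.
by move: H; move/GRing.addrI.
Qed.

Lemma kernel_mono (E : PreaddCat) (K B C T : E) (i : Mor K B) (p : Mor B C)
  (g h : Mor T K) : is_kernel i p -> i \oc g = i \oc h -> g = h.
Proof.
move=> [H0 Hk] e.
have : p \oc (i \oc g) = 0 by rewrite comp_assoc H0 comp0l.
move=> /Hk [w [_ Hu]].
by rewrite -(Hu g erefl) (Hu h (esym e)).
Qed.

Theorem proposition2p6 (E : ConflCat) (hRE : right_exact E) (hR3 : axiom_R3 E)
  (A B C X Y Z : E)
  (alpha : Mor A B) (beta : Mor B C) (i : Mor X Y) (d : Mor Y Z)
  (a1 : Mor A X) (a2 : Mor X A) (b1 : Mor B Y) (b2 : Mor Y B)
  (c1 : Mor C Z) (c2 : Mor Z C)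
  (sq1 : i \oc a1 = b1 \oc alpha) (sq2 : d \oc b1 = c1 \oc beta)
  (sq3 : alpha \oc a2 = b2 \oc i) (sq4 : beta \oc b2 = c2 \oc d)
  (ha : a2 \oc a1 = idm A) (hb : b2 \oc b1 = idm B) (hc : c2 \oc c1 = idm C) :
  Confl i d -> Confl alpha beta.
Proof.
move=> Hid.
have [[Hdi Hki] _] := confl_kc Hid.
have Kab : is_kernel alpha beta.
  split.
    rewrite -[alpha]comp_idl -hb -(comp_assoc b2 b1 alpha) -sq1.
    rewrite (comp_assoc beta b2) sq4 -(comp_assoc c2 d) (comp_assoc d i a1) Hdi.
    by rewrite comp0l comp0r.
  move=> T f Hf.
  have : d \oc (b1 \oc f) = 0 by rewrite comp_assoc sq2 -comp_assoc Hf comp0r.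
  move=> /Hki [g [Hg _]].
  exists (a2 \oc g); split.
    by rewrite comp_assoc sq3 -comp_assoc Hg comp_assoc hb comp_idl.
  move=> h Hh.
  have : a1 \oc h = g.
    apply: (@kernel_mono _ _ _ _ _ i d _ _ (conj Hdi Hki)).
    by rewrite Hg comp_assoc sq1 -comp_assoc Hh.
  by move=> <-; rewrite comp_assoc ha comp_idl.
have Dd : is_deflation d by exists X, i.
have [_ [_ R2]] := hRE.
have [Q [q [f' [[Hpb _] Dq]]]] := R2 _ _ _ d c1 Dd.
have Db : is_deflation beta.
  apply: (hR3 _ _ _ (b2 \oc f') beta).
    by exists A, alpha.
  by rewrite comp_assoc sq4 -comp_assoc Hpb comp_assoc hc comp_idl.
have [K [k Hk]] := Db.
have [[Hbk Hkk] _] := confl_kc Hk.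
have [u [Hu _]] := (proj2 Kab) _ k Hbk.
have [v [Hv _]] := Hkk _ alpha (proj1 Kab).
apply: (confl_iso (a := u) (b := idm B) (c := idm C) _ _ _ _ _ Hk).
- exists v; split.
    apply: (@kernel_mono _ _ _ _ _ k beta _ _ (conj Hbk Hkk)).
    by rewrite comp_assoc Hv Hu comp_idr.
  apply: (@kernel_mono _ _ _ _ _ alpha beta _ _ Kab).
  by rewrite comp_assoc Hu Hv comp_idr.
- by exists (idm B); rewrite comp_idl.
- by exists (idm C); rewrite comp_idl.
- by rewrite comp_idl Hu.
- by rewrite comp_idl comp_idr.
Qed.
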